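(* Let $\mu\in\mathcal{D}(\mathrm{Mem}[S])$, let $\mathcal{S}=\{S_1,\dots,S_N\}$ be a partition of $S$, let $\mathcal{T}=\{T_1,\dots,T_N\}$ be a partition of a finite set $T$ of variables, and let $f_i:\mathrm{Mem}[S_i]\to\mathrm{Mem}[T_i]$ ($1\le i\le N$) be either all non-decreasing or all non-increasing with respect to the pointwise orders. Let $\mu'\in\mathcal{D}(\mathrm{Mem}[T])$ be the distribution of the memory $f_1(p_{S_1}m)\bowtie\cdots\bowtie f_N(p_{S_N}m)$ for $m\sim\mu$, where $\bowtie$ denotes union of memories with disjoint domains. If $\mu$ is $\mathcal{S}$-PNA, then $\mu'$ is $\mathcal{T}$-PNA.
   Context: Values are real numbers; for finite $S$, $\mathrm{Mem}[S]$ is the set of maps $S\to\mathbb{R}$ ordered pointwise; $p_A$ is restriction; $\mathcal{D}(\cdot)$ denotes countably supported probability distributions. A partition is a set of pairwise disjoint nonempty sets; $\mathcal{T}$ coarsens $\mathcal{S}$ if $\bigcup\mathcal{T}=\bigcup\mathcal{S}$ and each element of $\mathcal{T}$ is a union of a subfamily of $\mathcal{S}$. For a partition $\mathcal{S}$ with $\bigcup\mathcal{S}\subseteq\mathrm{dom}(\mu)$, $\mu$ is $\mathcal{S}$-PNA if for every $\mathcal{T}$ coarsening $\mathcal{S}$ and every family $(f_A:\mathrm{Mem}[A]\to[0,\infty))_{A\in\mathcal{T}}$ all non-decreasing or all non-increasing, $\mathbb{E}_{m\sim\mu}[\prod_{A\in\mathcal{T}}f_A(p_Am)]\le\prod_{A\in\mathcal{T}}\mathbb{E}_{m\sim\mu}[f_A(p_Am)]$.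 *)

(* Defs.v *)
From HB Require Import structures.
From mathcomp Require Import all_boot all_order all_algebra.
From mathcomp Require Import finmap.
From mathcomp Require Import boolp classical_sets cardinality reals ereal esum.
Set Implicit Arguments. Unset Strict Implicit. Unset Printing Implicit Defensive.
Import Order.TTheory GRing.Theory Num.Theory.
Local Open Scope classical_set_scope.
Local Open Scope ring_scope.
Local Open Scope fset_scope.

Section Defs.
Variables (V : choiceType) (R : realType).

Definition Memory (S : {fset V}) : choiceType := {ffun S -> R}.

Definition mem_le (S : {fset V}) (m1 m2 : Memory S) : Prop := forall x, m1 x <= m2 x.

Definition mem_ext (S : {fset V}) (m : Memory S) (v : V) : R :=
  match insub v : option S with Some s => m s | None => 0 end.

(* restriction p_A : Mem[B] -> Memory[A] (meaningful when A `<=` B) *)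
Definition restr (A B : {fset V}) (m : Memory B) : Memory A := [ffun a : A => mem_ext m (val a)].

Definition nondecr (X : Type) (leX : X -> X -> Prop) (Y : Type) (leY : Y -> Y -> Prop)
  (f : X -> Y) := forall x y, leX x y -> leY (f x) (f y).
Definition nonincr (X : Type) (leX : X -> X -> Prop) (Y : Type) (leY : Y -> Y -> Prop)
  (f : X -> Y) := forall x y, leX x y -> leY (f y) (f x).

Definition is_distr (X : choiceType) (mu : X -> R) : Prop :=
  [/\ forall x, 0 <= mu x,
      countable [set x | mu x != 0] &
      (\esum_(x in [set: X]) (mu x)%:E = 1)%E].

(* expectation of a non-negative function (extended real valued) *)
Definition Expect (X : choiceType) (mu : X -> R) (g : X -> R) : \bar R :=
  \esum_(x in [set: X]) (mu x * g x)%:E.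

Definition is_pushforward (X Y : choiceType) (mu : X -> R) (F : X -> Y) (nu : Y -> R) : Prop :=
  forall y, (nu y)%:E = \esum_(x in [set x | F x = y]) (mu x)%:E.

Definition is_partition (P : {fset {fset V}}) : Prop :=
  (forall A, A \in P -> A != fset0) /\
  (forall A B, A \in P -> B \in P -> A != B -> [disjoint A & B]).

Definition fbigU (P : {fset {fset V}}) : {fset V} := \bigcup_(A <- P) A.

Definition coarsens (T S : {fset {fset V}}) : Prop :=
  fbigU T = fbigU S /\
  (forall A, A \in T -> exists F : {fset {fset V}}, F `<=` S /\ A = fbigU F).

Definition PNA (D : {fset V}) (mu : Memory D -> R) (S : {fset {fset V}}) : Prop :=
  fbigU S `<=` D /\
  forall (T : {fset {fset V}}) (f : forall A : {fset V}, Memory A -> R),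
    is_partition T -> coarsens T S ->
    (forall A, A \in T -> forall m, 0 <= f A m) ->
    ((forall A, A \in T -> nondecr (@mem_le A) (fun x y : R => x <= y) (f A)) \/
     (forall A, A \in T -> nonincr (@mem_le A) (fun x y : R => x <= y) (f A))) ->
    (Expect mu (fun m => (\prod_(A <- T) f A (restr A m))%R)
      <= \prod_(A <- T) Expect mu (fun m => f A (restr A m)))%E.

(* the joined memory  g_1 ⋈ ... ⋈ g_N  with g_i : Mem[T_i], T_i disjoint *)
Definition join_mem (N : nat) (Tf : 'I_N -> {fset V}) (T : {fset V})
  (g : forall i : 'I_N, Memory (Tf i)) : Memory T :=
  @finfun T (fun=> R) (fun t : T =>
  match [pick i : 'I_N | val t \in Tf i] with
                  | Some i => mem_ext (g i) (val t)
                  | None => 0 end).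

End Defs.

(* Main.v *)
Require Import Defs.
From HB Require Import structures.
From mathcomp Require Import all_boot all_order all_algebra.
From mathcomp Require Import finmap.
From mathcomp Require Import boolp classical_sets cardinality reals ereal esum fsbigop.
Import Order.TTheory GRing.Theory Num.Theory.
Local Open Scope ring_scope.
Local Open Scope fset_scope.

Section Aux.
Variable (R : realType).
Local Open Scope ereal_scope.

Lemma esumZl (T : choiceType) (P : set T) (a : T -> \bar R) (r : R) :
  (0 <= r)%R -> (forall i, 0 <= a i) ->
  \esum_(i in P) (r%:E * a i) = r%:E * \esum_(i in P) a i.
Proof.
move=> r0 a0; rewrite /esum -ereal_supZl //; last first.
  apply/set0P; exists 0; exists set0; first exact: fsets_set0.
  by rewrite fsbig_set0.
congr ereal_sup; apply/seteqP; split => x /=.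
  by case=> A FA <-; exists (\sum_(i \in A) a i); [exists A|rewrite ge0_mule_fsumr].
by case=> _ [A FA <-] <-; exists A => //; rewrite ge0_mule_fsumr.
Qed.

Lemma expect_push (X Y : choiceType) (mu : X -> R) (F : X -> Y) (nu : Y -> R)
  (G : Y -> R) : (forall x, 0 <= mu x)%R -> (forall y, 0 <= G y)%R ->
  is_pushforward mu F nu -> Expect nu G = Expect mu (fun x => G (F x)).
Proof.
move=> mu0 G0 hp; rewrite /Expect.
transitivity (\esum_(y in [set: Y]) \esum_(x in [set x | F x = y]) (G y * mu x)%:E).
  apply: eq_esum => y _; rewrite mulrC EFinM hp -esumZl //.
  all: try by move=> x; rewrite lee_fin.
rewrite esum_esum; last by move=> y x _ _; rewrite lee_fin mulr_ge0.
rewrite (@reindex_esum _ _ _ [set: X] _ (fun x => (F x, x))).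
  by apply: eq_esum => x _ /=; rewrite mulrC.
split.
- by move=> x _ /=; split.
- by move=> x1 x2 _ _ [].
- by move=> [y x] [_ /= <-]; exists x.
Qed.
End Aux.

Set Implicit Arguments.
Section Mem.
Variables (V : choiceType) (R : realType).

Lemma mem_extE (B : {fset V}) (m : Memory R B) x (xB : x \in B) :
  mem_ext m x = m [` xB].
Proof. by rewrite /mem_ext insubT. Qed.

Lemma mem_extN (B : {fset V}) (m : Memory R B) x : x \notin B -> mem_ext m x = 0.
Proof. by move=> xB; rewrite /mem_ext insubN. Qed.

Lemma mem_ext_le (B : {fset V}) (m1 m2 : Memory R B) x :
  mem_le m1 m2 -> mem_ext m1 x <= mem_ext m2 x.
Proof.
move=> le; case: (boolP (x \in B)) => xB.
  by rewrite (mem_extE m1 x xB) (mem_extE m2 x xB).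
by rewrite !mem_extN.
Qed.

Lemma restr_le (A B : {fset V}) (m1 m2 : Memory R B) :
  mem_le m1 m2 -> mem_le (restr A m1) (restr A m2).
Proof. by move=> le a; rewrite !ffunE mem_ext_le. Qed.

Lemma restr_restr (A B C : {fset V}) (m : Memory R C) : A `<=` B ->
  restr A (restr B m) = restr A m.
Proof.
move=> /fsubsetP AB; apply/ffunP => a; rewrite !ffunE.
have aB : val a \in B by apply: AB; exact: fsvalP.
by rewrite (mem_extE (restr B m) _ aB) ffunE.
Qed.

Lemma join_le (N : nat) (Tf : 'I_N -> {fset V}) (T : {fset V})
  (g1 g2 : forall i : 'I_N, Memory R (Tf i)) :
  (forall i, mem_le (g1 i) (g2 i)) -> mem_le (join_mem T g1) (join_mem T g2).
Proof.
move=> le t; rewrite !ffunE; case: pickP => [i _|_ //].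
exact: mem_ext_le.
Qed.
End Mem.
Unset Implicit Arguments.

Theorem mainTheorem18 (V : choiceType) (R : realType)
  (S T : {fset V}) (N : nat) (Sf Tf : 'I_N -> {fset V})
  (f : forall i : 'I_N, Memory R (Sf i) -> Memory R (Tf i))
  (mu : Memory R S -> R) (mu' : Memory R T -> R) :
  is_distr mu ->
  (forall i, Sf i != fset0) -> (forall i j, i != j -> [disjoint Sf i & Sf j]) ->
  \bigcup_(i in 'I_N) Sf i = S ->
  (forall i, Tf i != fset0) -> (forall i j, i != j -> [disjoint Tf i & Tf j]) ->
  \bigcup_(i in 'I_N) Tf i = T ->
  ((forall i, nondecr (@mem_le V R (Sf i)) (@mem_le V R (Tf i)) (f i)) \/
   (forall i, nonincr (@mem_le V R (Sf i)) (@mem_le V R (Tf i)) (f i))) ->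
  is_pushforward mu
    (fun m : Memory R S => join_mem T (fun i => f i (restr (Sf i) m))) mu' ->
  PNA mu [fset Sf i | i in 'I_N] ->
  PNA mu' [fset Tf i | i in 'I_N].
Proof.
move=> [mu0 _ _] Sne Sdisj SU Tne Tdisj TU fmon push [SsubS PNAS].
have SfI i j x : x \in Sf i -> x \in Sf j -> i = j.
  move=> xi xj; apply/eqP; apply: contraT => ij.
  by move/fdisjointP: (Sdisj _ _ ij) => /(_ x xi); rewrite xj.
have TfI i j x : x \in Tf i -> x \in Tf j -> i = j.
  move=> xi xj; apply/eqP; apply: contraT => ij.
  by move/fdisjointP: (Tdisj _ _ ij) => /(_ x xi); rewrite xj.
have memU (Q : {fset {fset V}}) x :
    reflect (exists2 A, A \in Q & x \in A) (x \in fbigU Q).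
  rewrite /fbigU; apply: (iffP (bigfcupP _ _ _ _)) => [[A /andP[AQ _] xA]|[A AQ xA]].
    by exists A.
  by exists A; rewrite ?AQ.
have memTf A : reflect (exists i, A = Tf i) (A \in [fset Tf i | i in 'I_N]).
  apply: (iffP (imfsetP _ _ _ _)) => [[i _ ->]|[i ->]]; by exists i.
have memSf A : reflect (exists i, A = Sf i) (A \in [fset Sf i | i in 'I_N]).
  apply: (iffP (imfsetP _ _ _ _)) => [[i _ ->]|[i ->]]; by exists i.
have memB (p : pred 'I_N) (F : 'I_N -> {fset V}) x :
    reflect (exists2 i, p i & x \in F i)
      (x \in \big[@fsetU _/fset0]_(i : 'I_N | p i) F i).
  apply: (iffP (bigfcupP _ _ _ _)) => [[i /andP[_ pi] xi]|[i pi xi]].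
    by exists i.
  by exists i; rewrite ?mem_index_enum ?pi.
split.
  apply/fsubsetP => x /memU [A /memTf [i ->] xi]; rewrite -TU.
  by apply/bigfcupP; exists i; rewrite ?mem_index_enum.
move=> P g Ppart [PU Pco] g0 gmon.
have K A i x : A \in P -> x \in A -> x \in Tf i -> Tf i `<=` A.
  move=> AP xA xi; have [F [/fsubsetP FT AF]] := Pco A AP.
  subst A; move: xA => /memU [B BF xB].
  have /memTf [j Bj] := FT _ BF; subst B.
  have ji := TfI _ _ _ xB xi; subst j.
  by apply/fsubsetP => y yi; apply/memU; exists (Tf i).
have inTf x : x \in fbigU P -> exists i, x \in Tf i.
  by rewrite PU => /memU [B /memTf [i ->]]; exists i.
pose phi A := \big[@fsetU _/fset0]_(i : 'I_N | Tf i `<=` A) Sf i.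
pose psi B := \big[@fsetU _/fset0]_(i : 'I_N | Sf i `<=` B) Tf i.
have memphi A x : reflect (exists2 i, Tf i `<=` A & x \in Sf i) (x \in phi A).
  exact: memB.
have Sphi A i : Sf i `<=` phi A -> Tf i `<=` A.
  move=> /fsubsetP h; have /fset0Pn [s si] := Sne i.
  by have /memphi [j hj sj] := h _ si; rewrite (SfI _ _ _ si sj).
have phiS A i : Tf i `<=` A -> Sf i `<=` phi A.
  by move=> h; apply/fsubsetP => s si; apply/memphi; exists i.
have psiphi A : A \in P -> psi (phi A) = A.
  move=> AP; apply/fsetP => x; apply/memB/idP.
    by case=> i /Sphi h xi; exact: (fsubsetP h).
  move=> xA; have xU : x \in fbigU P by apply/memU; exists A.
  have [i xi] := inTf _ xU; exists i => //; apply/phiS; exact: K AP xA xi.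
have phiinj : {in P &, injective phi}.
  by move=> A B AP BP e; rewrite -(psiphi _ AP) e psiphi.
pose Q := [fset phi A | A in P].
pose h := fun B (mb : Memory R B) =>
  g (psi B) (restr (psi B) (join_mem T (fun i => f i (restr (Sf i) mb)))).
have key A m : A \in P -> h (phi A) (restr (phi A) m) =
    g A (restr A (join_mem T (fun i => f i (restr (Sf i) m)))).
  move=> AP; rewrite /h psiphi //; congr (g A _).
  apply/ffunP => a; rewrite !ffunE /mem_ext; case: insubP => [t _ ta|//].
  rewrite !ffunE; case: pickP => [i ti|//]; rewrite restr_restr //.
  apply: phiS; apply: (K _ _ (val t) AP) => //; rewrite ta; exact: fsvalP.
have Qpart : is_partition Q.
  split.
    move=> B /imfsetP [A AP ->].
    have /fset0Pn [x xA] := Ppart.1 A AP.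
    have xU : x \in fbigU P by apply/memU; exists A.
    have [i xi] := inTf _ xU; have /fset0Pn [s si] := Sne i.
    apply/fset0Pn; exists s; apply/memphi; exists i => //; exact: K AP xA xi.
  move=> B1 B2 /imfsetP [A1 A1P ->] /imfsetP [A2 A2P ->] ne.
  have A12 : A1 != A2 by apply: contraNneq ne => ->.
  have d := Ppart.2 _ _ A1P A2P A12.
  apply/fdisjointP => s /memphi [i hi si]; apply/negP => /memphi [j hj sj].
  have eij := SfI _ _ _ si sj; subst j.
  have /fset0Pn [t ti] := Tne i.
  by move/fdisjointP: d => /(_ t (fsubsetP hi _ ti)); rewrite (fsubsetP hj _ ti).
have Qco : coarsens Q [fset Sf i | i in 'I_N].
  split.
    apply/fsetP => s; apply/memU/memU.
      case=> B /imfsetP [A AP ->] /memphi [i _ si]; exists (Sf i) => //.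
      by apply/memSf; exists i.
    case=> B /memSf [i ->] si; have /fset0Pn [t ti] := Tne i.
    have tU : t \in fbigU P.
      by rewrite PU; apply/memU; exists (Tf i) => //; apply/memTf; exists i.
    have [A AP tA] : exists2 A, A \in P & t \in A by apply/memU.
    exists (phi A); first by apply/imfsetP; exists A.
    apply/memphi; exists i => //; exact: K AP tA ti.
  move=> B /imfsetP [A AP ->].
  exists [fset Sf i | i in [seq i <- enum 'I_N | Tf i `<=` A]]; split.
    by apply/fsubsetP => C /imfsetP [i _ ->]; apply/memSf; exists i.
  apply/fsetP => s; apply/memphi/memU.
    case=> i hi si; exists (Sf i) => //; apply/imfsetP; exists i => //.
    by rewrite /= mem_filter hi mem_enum.
  case=> C /imfsetP [i]; rewrite /= mem_filter => /andP [hi _] -> si.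
  by exists i.
have Qnn : forall B, B \in Q -> forall m, 0 <= h B m.
  by move=> B /imfsetP [A AP ->] mb; rewrite /h psiphi //; exact: g0.
have Qmon : (forall B, B \in Q -> nondecr (@mem_le V R B) (fun x y : R => x <= y) (h B)) \/
     (forall B, B \in Q -> nonincr (@mem_le V R B) (fun x y : R => x <= y) (h B)).
  case: fmon => fm; case: gmon => gm; [left|right|right|left];
  move=> B /imfsetP [A AP ->] m1 m2 le; rewrite /h psiphi //; apply: gm => //;
  apply: restr_le; apply: join_le => i; apply: fm; exact: restr_le.
have := PNAS Q h Qpart Qco Qnn Qmon.
pose Fm := fun m : Memory R S => join_mem T (fun i => f i (restr (Sf i) m)).
have E1 : (\prod_(A <- P) Expect mu' (fun m' => g A (restr A m')) =
    \prod_(B <- Q) Expect mu (fun m => h B (restr B m)))%E.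
  rewrite big_imfset //=; apply: eq_big_seq => A AP.
  rewrite (expect_push _ _ _ _ _ _ _ mu0 _ push); last by move=> y; exact: g0.
  by congr Expect; apply: boolp.funext => m; rewrite key.
have E2 : Expect mu' (fun m' => \prod_(A <- P) g A (restr A m')) =
    Expect mu (fun m => \prod_(B <- Q) h B (restr B m)).
  rewrite (expect_push _ _ _ _ _ _ _ mu0 _ push); last first.
    by move=> y; rewrite big_seq; apply: prodr_ge0 => A AP; exact: g0.
  congr Expect; apply: boolp.funext => m.
  rewrite big_imfset //=; apply: eq_big_seq => A AP; by rewrite key.
by rewrite E1 E2.
Qed.
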